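(* Let $A,B$ be finite-dimensional systems, $\{|j\rangle\}_{j=0}^{|A|-1}$ an orthonormal basis of $A$, $U_0,\dots,U_{|A|-1}$ unitaries on $B$, and $\mathcal C_U(X)=C_UXC_U^\dagger$ with $C_U=\sum_j|j\rangle\langle j|_A\otimes U_j$, viewed as a bipartite channel $AB\to AB$. Then \[ S_\infty[A|B]_{\mathcal C_U}\ge-2\log|A|, \] with equality when the vectors $\{|U_j\rangle\!\rangle\}_j$ are mutually orthogonal, i.e., $\operatorname{tr}(U_i^\dagger U_j)=0$ for all $i\ne j$.
   Context: $\log$ base 2; $\mathrm{St}(X)$ density operators; $\mathrm{Ch}(X',X)$ quantum channels. $|U\rangle\!\rangle:=\sum_i(\mathbb 1\otimes U)|ii\rangle$ denotes vectorization. For a bipartite channel $\mathcal N$ from $A'B'$ to $AB$ (here $A'=A$, $B'=B$): $\mathcal R^{\mathbb 1}_{A'\to A}(X):=\operatorname{tr}(X)\mathbb 1_A$; $D_\infty(\rho\|\sigma):=\log\inf\{\lambda:\rho\le\lambda\sigma\}$; for a channel $\mathcal M$ and CP map $\mathcal M'$, $D_\infty[\mathcal M\|\mathcal M']:=\sup_{\rho\in\mathrm{St}(RX')}D_\infty((\mathrm{id}\otimes\mathcal M)(\rho)\|(\mathrm{id}\otimes\mathcal M')(\rho))$; conditional channel min-entropy $S_\infty[A|B]_{\mathcal N}:=-\inf_{\mathcal Q\in\mathrm{Ch}(B',B)}D_\infty[\mathcal N\|\mathcal R^{\mathbb 1}_{A'\to A}\otimes\mathcal Q]$. *)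

(* Defs.v *)
From HB Require Import structures.
From mathcomp Require Import all_boot all_algebra.
From mathcomp Require Import complex mxtens.
From mathcomp Require Import all_classical all_reals ereal exp.

Set Implicit Arguments.
Unset Strict Implicit.
Unset Printing Implicit Defensive.

Import GRing.Theory Num.Theory.
Local Open Scope ring_scope.
Local Open Scope complex_scope.
Local Open Scope classical_set_scope.

Section QDefs.
Variable R : realType.
Local Notation C := R[i].

Definition adj m n (A : 'M[C]_(m, n)) : 'M[C]_(n, m) := map_mx conjc A^T.

Definition psd n (A : 'M[C]_n) : Prop :=
  forall v : 'cV[C]_n, 0 <= (adj v *m A *m v) 0 0.

Definition loewner n (A B : 'M[C]_n) : Prop := psd (B - A).

Definition state n (rho : 'M[C]_n) : Prop := psd rho /\ \tr rho = 1.

Definition unitary n (U : 'M[C]_n) : Prop :=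
  U *m adj U = 1%:M /\ adj U *m U = 1%:M.

(* block (i,j) of a matrix on a bipartite space C^k (x) C^n
   (tensor ordering of mxtens: first factor is the major index) *)
Definition block k n (X : 'M[C]_(k * n)) (i j : 'I_k) : 'M[C]_n :=
  \matrix_(a, b) X (mxtens_index (i, a)) (mxtens_index (j, b)).

(* tensor product of linear maps:
   (M1 (x) M2)(sum_ij E_ij (x) X_ij) = sum_ij M1(E_ij) (x) M2(X_ij) *)
Definition maptens n1 m1 n2 m2 (M1 : 'M[C]_n1 -> 'M[C]_m1)
  (M2 : 'M[C]_n2 -> 'M[C]_m2) (X : 'M[C]_(n1 * n2)) : 'M[C]_(m1 * m2) :=
  \sum_(i < n1) \sum_(j < n1) (M1 (delta_mx i j) *t M2 (block X i j)).

Definition idmap k : 'M[C]_k -> 'M[C]_k := fun X => X.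

Definition linmap n m (M : 'M[C]_n -> 'M[C]_m) : Prop :=
  forall (a : C) (X Y : 'M[C]_n), M (a *: X + Y) = a *: M X + M Y.

Definition CPmap n m (M : 'M[C]_n -> 'M[C]_m) : Prop :=
  linmap M /\
  forall k (X : 'M[C]_(k * n)), psd X -> psd (maptens (@idmap k) M X).

Definition channel n m (M : 'M[C]_n -> 'M[C]_m) : Prop :=
  CPmap M /\ forall X : 'M[C]_n, \tr (M X) = \tr X.

Definition log2 (x : R) : R := ln x / ln 2.

Definition Dmax n (rho sigma : 'M[C]_n) : \bar R :=
  let S := [set l : R | loewner rho (l%:C *: sigma)] in
  if `[< S !=set0 >] then ((log2 (inf S))%:E)%E else (+oo)%E.

Definition Dmaxch n m (M M' : 'M[C]_n -> 'M[C]_m) : \bar R :=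
  ereal_sup [set d | exists k (rho : 'M[C]_(k * n)),
     state rho /\ d = Dmax (maptens (@idmap k) M rho) (maptens (@idmap k) M' rho)].

Definition Rone n m : 'M[C]_n -> 'M[C]_m := fun X => (\tr X)%:M.

Definition Sminch nA' nB' nA nB
  (N : 'M[C]_(nA' * nB') -> 'M[C]_(nA * nB)) : \bar R :=
  (- ereal_inf [set d | exists Q : 'M[C]_nB' -> 'M[C]_nB,
        channel Q /\ d = Dmaxch N (maptens (@Rone nA' nA) Q)])%E.

End QDefs.

(* Main.v *)
Require Import Defs.
From HB Require Import structures.
From mathcomp Require Import all_boot all_algebra.
From mathcomp Require Import complex mxtens.
From mathcomp Require Import all_classical all_reals ereal exp.
Import GRing.Theory Num.Theory.
Local Open Scope ring_scope.

Module Helpers.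
Set Implicit Arguments.
Unset Strict Implicit.
Unset Printing Implicit Defensive.
Local Open Scope complex_scope.

Section A.
Variable R : realType.
Local Notation C := R[i].

Lemma adjE m n (A : 'M[C]_(m,n)) i j : adj A i j = (A j i)^*.
Proof. by rewrite !mxE. Qed.

Lemma adjK m n (A : 'M[C]_(m,n)) : adj (adj A) = A.
Proof. by apply/matrixP=> i j; rewrite !adjE conjcK. Qed.

Lemma adjD m n (A B : 'M[C]_(m,n)) : adj (A + B) = adj A + adj B.
Proof. by apply/matrixP=> i j; rewrite !mxE rmorphD. Qed.

Lemma adjN m n (A : 'M[C]_(m,n)) : adj (- A) = - adj A.
Proof. by apply/matrixP=> i j; rewrite !mxE rmorphN. Qed.

Lemma adjB m n (A B : 'M[C]_(m,n)) : adj (A - B) = adj A - adj B.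
Proof. by rewrite adjD adjN. Qed.

Lemma adj0 m n : adj (0 : 'M[C]_(m,n)) = 0.
Proof. by apply/matrixP=> i j; rewrite !mxE rmorph0. Qed.

Lemma adj_sum m n (I : finType) (F : I -> 'M[C]_(m,n)) :
  adj (\sum_i F i) = \sum_i adj (F i).
Proof.
apply/matrixP=> i j; rewrite adjE !summxE rmorph_sum.
by apply: eq_bigr => k _; rewrite adjE.
Qed.

Lemma adjZ m n (a : C) (A : 'M[C]_(m,n)) : adj (a *: A) = a^* *: adj A.
Proof. by apply/matrixP=> i j; rewrite !mxE rmorphM. Qed.

Lemma adj_mul m n p (A : 'M[C]_(m,n)) (B : 'M[C]_(n,p)) :
  adj (A *m B) = adj B *m adj A.
Proof.
apply/matrixP=> i j; rewrite adjE !mxE rmorph_sum.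
by apply: eq_bigr => k _; rewrite rmorphM !adjE mulrC.
Qed.

Lemma adj_tens m n p q (A : 'M[C]_(m,n)) (B : 'M[C]_(p,q)) :
  adj (A *t B) = adj A *t adj B.
Proof.
apply/matrixP=> i j.
case: (mxtens_indexP i)=> i0 i1; case: (mxtens_indexP j)=> j0 j1.
by rewrite adjE !tensmxE rmorphM !adjE.
Qed.

Lemma adj_scalar n (a : C) : adj (a%:M : 'M_n) = a^*%:M.
Proof.
apply/matrixP=> i j; rewrite adjE !mxE eq_sym.
by rewrite rmorphMn.
Qed.

Lemma tensmxDl m n p q (A B : 'M[C]_(m,n)) (D : 'M[C]_(p,q)) :
  (A + B) *t D = A *t D + B *t D.
Proof.
apply/matrixP=> i j.
case: (mxtens_indexP i)=> i0 i1; case: (mxtens_indexP j)=> j0 j1.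
by rewrite !mxE !mxtens_indexK mulrDl.
Qed.

Lemma tensmxDr m n p q (A : 'M[C]_(m,n)) (B D : 'M[C]_(p,q)) :
  A *t (B + D) = A *t B + A *t D.
Proof.
apply/matrixP=> i j.
case: (mxtens_indexP i)=> i0 i1; case: (mxtens_indexP j)=> j0 j1.
by rewrite !mxE !mxtens_indexK mulrDr.
Qed.

Lemma tensmxZl m n p q (a : C) (A : 'M[C]_(m,n)) (D : 'M[C]_(p,q)) :
  (a *: A) *t D = a *: (A *t D).
Proof.
apply/matrixP=> i j.
case: (mxtens_indexP i)=> i0 i1; case: (mxtens_indexP j)=> j0 j1.
by rewrite !mxE !mxtens_indexK mulrA.
Qed.

Lemma tensmxZr m n p q (a : C) (A : 'M[C]_(m,n)) (D : 'M[C]_(p,q)) :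
  A *t (a *: D) = a *: (A *t D).
Proof.
apply/matrixP=> i j.
case: (mxtens_indexP i)=> i0 i1; case: (mxtens_indexP j)=> j0 j1.
by rewrite !mxE !mxtens_indexK mulrCA.
Qed.

Lemma tensmx_suml m n p q (I : finType) (F : I -> 'M[C]_(m,n)) (D : 'M[C]_(p,q)) :
  (\sum_i F i) *t D = \sum_i (F i *t D).
Proof.
apply/matrixP=> i j.
case: (mxtens_indexP i)=> i0 i1; case: (mxtens_indexP j)=> j0 j1.
rewrite tensmxE !summxE mulr_suml; apply: eq_bigr=> k _.
by rewrite tensmxE.
Qed.

Lemma tensmx_sumr m n p q (I : finType) (A : 'M[C]_(m,n)) (F : I -> 'M[C]_(p,q)) :
  A *t (\sum_i F i) = \sum_i (A *t F i).
Proof.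
apply/matrixP=> i j.
case: (mxtens_indexP i)=> i0 i1; case: (mxtens_indexP j)=> j0 j1.
rewrite tensmxE !summxE mulr_sumr; apply: eq_bigr=> k _.
by rewrite tensmxE.
Qed.

Lemma tensmxNl m n p q (A : 'M[C]_(m,n)) (D : 'M[C]_(p,q)) :
  (- A) *t D = - (A *t D).
Proof. by rewrite -scaleN1r tensmxZl scaleN1r. Qed.

Lemma tensmxNr m n p q (A : 'M[C]_(m,n)) (D : 'M[C]_(p,q)) :
  A *t (- D) = - (A *t D).
Proof. by rewrite -scaleN1r tensmxZr scaleN1r. Qed.

Lemma tensmxBr m n p q (A : 'M[C]_(m,n)) (B D : 'M[C]_(p,q)) :
  A *t (B - D) = A *t B - A *t D.
Proof. by rewrite tensmxDr tensmxNr. Qed.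

Lemma blockE k n (X : 'M[C]_(k * n)) i j a b :
  block X i j a b = X (mxtens_index (i, a)) (mxtens_index (j, b)).
Proof. by rewrite mxE. Qed.

Lemma block_tens k n (A : 'M[C]_k) (B : 'M[C]_n) i j :
  block (A *t B) i j = A i j *: B.
Proof. by apply/matrixP=> a b; rewrite !mxE !mxtens_indexK. Qed.

Lemma blockD k n (X Y : 'M[C]_(k * n)) i j :
  block (X + Y) i j = block X i j + block Y i j.
Proof. by apply/matrixP=> a b; rewrite !mxE. Qed.

Lemma blockZ k n (a : C) (X : 'M[C]_(k * n)) i j :
  block (a *: X) i j = a *: block X i j.
Proof. by apply/matrixP=> p q; rewrite !mxE. Qed.

Lemma block_sum k n (I : finType) (F : I -> 'M[C]_(k * n)) i j :
  block (\sum_l F l) i j = \sum_l block (F l) i j.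
Proof.
apply/matrixP=> a b; rewrite !mxE !summxE; apply: eq_bigr=> l _.
by rewrite mxE.
Qed.

Lemma adj1 n : adj (1%:M : 'M[C]_n) = 1%:M.
Proof. by rewrite adj_scalar rmorph1. Qed.

Lemma adj_delta m n (i : 'I_m) (j : 'I_n) :
  adj (delta_mx i j : 'M[C]_(m,n)) = delta_mx j i.
Proof.
apply/matrixP=> a b; rewrite adjE !mxE.
by rewrite rmorph_nat andbC.
Qed.

Lemma sum_tens (m n : nat) (F : 'I_(m * n) -> C) :
  \sum_(k < m * n) F k = \sum_(i < m) \sum_(j < n) F (mxtens_index (i, j)).
Proof.
rewrite pair_big (reindex (@mxtens_index m n)) /=.
  by apply: eq_bigr => -[i j].
by exists (@mxtens_unindex m n) => k _; rewrite ?mxtens_indexK ?mxtens_unindexK.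
Qed.

Lemma sum_tens_mx (m n p q : nat) (F : 'I_(m * n) -> 'M[C]_(p,q)) :
  \sum_(k < m * n) F k = \sum_(i < m) \sum_(j < n) F (mxtens_index (i, j)).
Proof.
rewrite pair_big (reindex (@mxtens_index m n)) /=.
  by apply: eq_bigr => -[i j].
by exists (@mxtens_unindex m n) => k _; rewrite ?mxtens_indexK ?mxtens_unindexK.
Qed.

Lemma block_decomp k n (X : 'M[C]_(k * n)) :
  X = \sum_(i < k) \sum_(j < k) (delta_mx i j *t block X i j).
Proof.
apply/matrixP=> p q.
case: (mxtens_indexP p)=> i0 i1; case: (mxtens_indexP q)=> j0 j1.
rewrite summxE (bigD1 i0) //= summxE (bigD1 j0) //= tensmxE !mxE !eqxx mul1r.
rewrite [X in _ + X + _]big1 ?addr0; last first.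
  by move=> j; rewrite eq_sym => /negPf ne; rewrite tensmxE mxE ne andbF mul0r.
rewrite big1 ?addr0 // => i; rewrite eq_sym => /negPf ne; rewrite summxE big1 // => j _.
by rewrite tensmxE mxE ne mul0r.
Qed.

Lemma block_sum_delta k n (F : 'I_k -> 'I_k -> 'M[C]_n) i j :
  block (\sum_(p < k) \sum_(q < k) (delta_mx p q *t F p q)) i j = F i j.
Proof.
rewrite block_sum (bigD1 i) //= block_sum (bigD1 j) //= block_tens mxE !eqxx scale1r.
rewrite [X in _ + X + _]big1 ?addr0; last first.
  by move=> q; rewrite eq_sym => /negPf ne; rewrite block_tens mxE ne andbF scale0r.
rewrite big1 ?addr0 // => p; rewrite eq_sym => /negPf ne; rewrite block_sum big1 // => q _.
by rewrite block_tens mxE ne scale0r.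
Qed.

Lemma tens11 m n : (1%:M : 'M[C]_m) *t (1%:M : 'M[C]_n) = 1%:M.
Proof.
apply/matrixP=> i j.
case: (mxtens_indexP i)=> i0 i1; case: (mxtens_indexP j)=> j0 j1.
rewrite tensmxE !mxE (inj_eq (can_inj (@mxtens_indexK m n))) xpair_eqE.
by case: (i0 == j0); case: (i1 == j1); rewrite ?mulr1 ?mulr0.
Qed.

Definition qf n (X : 'M[C]_n) (v : 'cV[C]_n) : C := (adj v *m X *m v) 0 0.

Lemma qfD n (X Y : 'M[C]_n) v : qf (X + Y) v = qf X v + qf Y v.
Proof. by rewrite /qf mulmxDr mulmxDl mxE. Qed.

Lemma qfN n (X : 'M[C]_n) v : qf (- X) v = - qf X v.
Proof. by rewrite /qf mulmxN mulNmx mxE. Qed.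

Lemma qfB n (X Y : 'M[C]_n) v : qf (X - Y) v = qf X v - qf Y v.
Proof. by rewrite qfD qfN. Qed.

Lemma qf0 n (v : 'cV[C]_n) : qf 0 v = 0.
Proof. by rewrite /qf mulmx0 mul0mx mxE. Qed.

Lemma qf_sum n (I : finType) (F : I -> 'M[C]_n) v :
  qf (\sum_i F i) v = \sum_i qf (F i) v.
Proof.
rewrite /qf mulmx_sumr mulmx_suml summxE; apply: eq_bigr => i _ //.
Qed.

Lemma qf_conj m n (B : 'M[C]_(m,n)) (X : 'M[C]_n) v :
  qf (B *m X *m adj B) v = qf X (adj B *m v).
Proof. by rewrite /qf adj_mul adjK !mulmxA. Qed.

Lemma psdP n (X : 'M[C]_n) : psd X <-> forall v, 0 <= qf X v.
Proof. by []. Qed.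

Lemma psd_conj m n (B : 'M[C]_(m,n)) (X : 'M[C]_n) :
  psd X -> psd (B *m X *m adj B).
Proof. by move=> pX v; rewrite -/(qf _ v) qf_conj; apply: pX. Qed.

Lemma psd0 n : psd (0 : 'M[C]_n).
Proof. by move=> v; rewrite -/(qf _ v) qf0. Qed.

Lemma psdD n (X Y : 'M[C]_n) : psd X -> psd Y -> psd (X + Y).
Proof. by move=> pX pY v; rewrite -/(qf _ v) qfD addr_ge0 //; [apply: pX|apply: pY]. Qed.

Lemma psd_sum n (I : finType) (F : I -> 'M[C]_n) :
  (forall i, psd (F i)) -> psd (\sum_i F i).
Proof.
move=> pF v; rewrite -/(qf _ v) qf_sum; apply: sumr_ge0 => i _; apply: pF.
Qed.

Lemma loewner_qf n (A B : 'M[C]_n) v : loewner A B -> qf A v <= qf B v.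
Proof. by move=> h; have := h v; rewrite -/(qf _ v) qfB subr_ge0. Qed.

Lemma loewner_trans n (A B D : 'M[C]_n) :
  loewner A B -> loewner B D -> loewner A D.
Proof.
move=> h1 h2; rewrite /loewner.
have -> : D - A = (D - B) + (B - A) by rewrite addrA subrK.
exact: psdD.
Qed.

Lemma loewner_psd n (A B : 'M[C]_n) : psd (B - A) -> loewner A B.
Proof. by []. Qed.

Lemma mxtrace_tens m n (A : 'M[C]_m) (B : 'M[C]_n) :
  \tr (A *t B) = \tr A * \tr B.
Proof.
rewrite /mxtrace sum_tens mulr_suml; apply: eq_bigr => i _.
by rewrite mulr_sumr; apply: eq_bigr => j _; rewrite tensmxE.
Qed.

Lemma mxtrace_delta n (i j : 'I_n) : \tr (delta_mx i j : 'M[C]_n) = (i == j)%:R.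
Proof.
rewrite /mxtrace (bigD1 i) //= big1 ?addr0; first by rewrite mxE eqxx eq_sym.
by move=> k /negPf ne; rewrite mxE ne.
Qed.

Lemma maptens_sum_delta k n m (M : 'M[C]_n -> 'M[C]_m) (F : 'I_k -> 'I_k -> 'M[C]_n) :
  maptens (@idmap R k) M (\sum_(p < k) \sum_(q < k) (delta_mx p q *t F p q)) =
  \sum_(p < k) \sum_(q < k) (delta_mx p q *t M (F p q)).
Proof.
rewrite /maptens; apply: eq_bigr => p _; apply: eq_bigr => q _.
by rewrite block_sum_delta.
Qed.

Lemma maptens_ext k n m (M1 M2 : 'M[C]_n -> 'M[C]_m) (X : 'M[C]_(k * n)) :
  (forall Z, M1 Z = M2 Z) -> maptens (@idmap R k) M1 X = maptens (@idmap R k) M2 X.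
Proof.
move=> h; rewrite /maptens; apply: eq_bigr => p _; apply: eq_bigr => q _.
by rewrite h.
Qed.

Lemma maptens_scalemap k n m (a : C) (F : 'M[C]_n -> 'M[C]_m) (X : 'M[C]_(k * n)) :
  maptens (@idmap R k) (fun Z => a *: F Z) X = a *: maptens (@idmap R k) F X.
Proof.
rewrite /maptens scaler_sumr; apply: eq_bigr => p _.
rewrite scaler_sumr; apply: eq_bigr => q _.
by rewrite tensmxZr.
Qed.

Lemma maptens_conj k n m (K : 'M[C]_(m, n)) (X : 'M[C]_(k * n)) :
  maptens (@idmap R k) (fun Z => K *m Z *m adj K) X =
  (1%:M *t K) *m X *m adj (1%:M *t K).
Proof.
rewrite {2}(block_decomp X) mulmx_sumr mulmx_suml /maptens; apply: eq_bigr => p _.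
rewrite mulmx_sumr mulmx_suml; apply: eq_bigr => q _.
by rewrite adj_tens adj1 !tensmx_mul mul1mx mulmx1.
Qed.

Lemma psd_outer n (u : 'cV[C]_n) : psd (u *m adj u).
Proof.
move=> v; rewrite !mulmxA -(mulmxA (adj v *m u)).
have -> : adj u *m v = adj (adj v *m u) by rewrite adj_mul adjK.
set w := adj v *m u.
have -> : (w *m adj w) 0 0 = w 0 0 * (w 0 0)^*.
  by rewrite mxE big_ord1 adjE.
exact: mulcJ_ge0.
Qed.

Lemma trace_qf n (X : 'M[C]_n) : \tr X = \sum_i qf X (delta_mx i 0).
Proof.
rewrite /mxtrace; apply: eq_bigr => i _.
by rewrite /qf adj_delta -rowE -colE !mxE.
Qed.

Lemma psd_trace_ge0 n (X : 'M[C]_n) : psd X -> 0 <= \tr X.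
Proof. by move=> pX; rewrite trace_qf; apply: sumr_ge0 => i _; apply: pX. Qed.

Lemma maptens_summap k n m (I : finType) (F : I -> 'M[C]_n -> 'M[C]_m) (X : 'M[C]_(k * n)) :
  maptens (@idmap R k) (fun Z => \sum_l F l Z) X = \sum_l maptens (@idmap R k) (F l) X.
Proof.
rewrite /maptens [RHS]exchange_big /=; apply: eq_bigr => p _.
rewrite [RHS]exchange_big /=; apply: eq_bigr => q _.
by rewrite tensmx_sumr.
Qed.

Lemma qfZ n (a : C) (X : 'M[C]_n) v : qf (a *: X) v = a * qf X v.
Proof. by rewrite /qf -scalemxAr -scalemxAl mxE. Qed.

Lemma psdZ n (a : C) (X : 'M[C]_n) : 0 <= a -> psd X -> psd (a *: X).
Proof. by move=> a0 pX v; rewrite -/(qf _ v) qfZ mulr_ge0 //; apply: pX. Qed.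

Lemma zmod4 (V : zmodType) (a b c d : V) : a - c - (b - d) = a - b - c + d.
Proof. by rewrite opprB addrA addrAC [a - c - b]addrAC. Qed.

Lemma sum_if_eq (V : zmodType) (I : finType) (F : I -> V) (i : I) :
  \sum_j (if j == i then F j else 0) = F i.
Proof. by rewrite -big_mkcond /= big_pred1_eq. Qed.

Lemma mul_col_row m n p (A : 'M[C]_(m,n)) (B : 'M[C]_(n,p)) :
  A *m B = \sum_i (col i A *m row i B).
Proof.
apply/matrixP=> x y; rewrite !mxE summxE; apply: eq_bigr => i _.
by rewrite !mxE big_ord1 !mxE.
Qed.

Lemma cdelta_c n (u w : 'cV[C]_n) a b :
  adj u *m delta_mx a b *m w = ((u a 0)^* * w b 0)%:M.
Proof.
apply/matrixP=> x y; rewrite [x]ord1 [y]ord1 !mxE eqxx mulr1n.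
rewrite (bigD1 b) //= big1 ?addr0.
  rewrite !mxE (bigD1 a) //= big1 ?addr0; first by rewrite !mxE !eqxx mulr1.
  by move=> j /negPf ne; rewrite !mxE ne mulr0.
by move=> j /negPf ne; rewrite !mxE big1 ?mul0r // => k _; rewrite !mxE ne andbF mulr0.
Qed.

Lemma loewnerZ n (A B : 'M[C]_n) (c : C) : 0 <= c -> loewner A B -> loewner (c *: A) (c *: B).
Proof. by move=> c0 h; rewrite /loewner -scalerBr; apply: psdZ. Qed.

Lemma loewnerD n (A B A' B' : 'M[C]_n) : loewner A B -> loewner A' B' -> loewner (A + A') (B + B').
Proof.
move=> h1 h2; rewrite /loewner.
have -> : B + B' - (A + A') = (B - A) + (B' - A') by rewrite opprD addrACA.
exact: psdD.
Qed.

Lemma cs_expand m n (Y1 Y2 : 'M[C]_(m,n)) (X : 'M[C]_n) :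
  (Y1 - Y2) *m X *m adj (Y1 - Y2) =
  Y1 *m X *m adj Y1 - Y1 *m X *m adj Y2 - Y2 *m X *m adj Y1 + Y2 *m X *m adj Y2.
Proof. by rewrite adjB mulmxBr !mulmxBl zmod4. Qed.

Lemma zmod5 (V : zmodType) (a b : V) : a - b - b + a = a *+ 2 - b *+ 2.
Proof. by rewrite !mulr2n opprD addrA [LHS]addrC !addrA. Qed.

Lemma cs_loewner n m p (Y : 'I_p -> 'M[C]_(m,n)) (X : 'M[C]_n) : psd X ->
  loewner ((\sum_(j < p) Y j) *m X *m adj (\sum_(j < p) Y j))
          (p%:R *: \sum_(j < p) (Y j *m X *m adj (Y j))).
Proof.
move=> pX.
set T := \sum_(j < p) (Y j *m X *m adj (Y j)).
set S := \sum_(j < p) Y j.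
have E : \sum_(j < p) \sum_(l < p) ((Y j - Y l) *m X *m adj (Y j - Y l)) =
         (2%:R : C) *: (p%:R *: T - S *m X *m adj S).
  have E1 : \sum_(j < p) \sum_(l < p) ((Y j - Y l) *m X *m adj (Y j - Y l)) =
     \sum_(j < p) \sum_(l < p) (Y j *m X *m adj (Y j)) - \sum_(j < p) \sum_(l < p) (Y j *m X *m adj (Y l))
     - \sum_(j < p) \sum_(l < p) (Y l *m X *m adj (Y j)) + \sum_(j < p) \sum_(l < p) (Y l *m X *m adj (Y l)).
    rewrite -!sumrB -big_split /=; apply: eq_bigr => j _.
    rewrite -!sumrB -big_split /=; apply: eq_bigr => l _.
    exact: cs_expand.
  have E2 : \sum_(j < p) \sum_(l < p) (Y j *m X *m adj (Y j)) = p%:R *: T.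
    rewrite /T scaler_sumr; apply: eq_bigr => j _.
    by rewrite sumr_const card_ord scaler_nat.
  have E3 : \sum_(j < p) \sum_(l < p) (Y l *m X *m adj (Y l)) = p%:R *: T.
    by rewrite exchange_big /= E2.
  have E4 : \sum_(j < p) \sum_(l < p) (Y j *m X *m adj (Y l)) = S *m X *m adj S.
    rewrite /S adj_sum !mulmx_suml; apply: eq_bigr => j _.
    by rewrite mulmx_sumr.
  have E5 : \sum_(j < p) \sum_(l < p) (Y l *m X *m adj (Y j)) = S *m X *m adj S.
    by rewrite exchange_big /= E4.
  by rewrite E1 E2 E3 E4 E5 scalerBr !scaler_nat zmod5.
have pD : psd (\sum_(j < p) \sum_(l < p) ((Y j - Y l) *m X *m adj (Y j - Y l))).
  by apply: psd_sum => j; apply: psd_sum => l; apply: psd_conj.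
rewrite /loewner.
have -> : p%:R *: T - S *m X *m adj S =
    (2%:R : C)^-1 *: \sum_(j < p) \sum_(l < p) ((Y j - Y l) *m X *m adj (Y j - Y l)).
  by rewrite E scalerA mulVf ?scale1r // pnatr_eq0.
by apply: psdZ => //; rewrite invr_ge0 ler0n.
Qed.

Definition Pij n (V : 'M[C]_n) (i j : 'I_n) : 'M[C]_n := col i V *m adj (col j V).

Definition Kop dA dB (V : 'M[C]_dA) (U : 'I_dA -> 'M[C]_dB) (l i j : 'I_dA) :
  'M[C]_(dA * dB) := Pij V i j *t U l.

Definition Qmap dA dB (U : 'I_dA -> 'M[C]_dB) (Y : 'M[C]_dB) : 'M[C]_dB :=
  (dA%:R)^-1 *: \sum_l (U l *m Y *m adj (U l)).

Lemma row_adj m n (A : 'M[C]_(m,n)) i : row i (adj A) = adj (col i A).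
Proof. by apply/matrixP=> x y; rewrite !mxE. Qed.

Lemma adjPij n (V : 'M[C]_n) i j : adj (Pij V i j) = Pij V j i.
Proof. by rewrite /Pij adj_mul adjK. Qed.

Lemma sum_Pii n (V : 'M[C]_n) : unitary V -> \sum_i Pij V i i = 1%:M.
Proof.
case=> h _; rewrite -h (mul_col_row V (adj V)); apply: eq_bigr => i _.
by rewrite row_adj.
Qed.

Lemma Pij_delta n (V : 'M[C]_n) i j a b :
  Pij V i j *m delta_mx a b *m Pij V j i = ((V a j)^* * V b j) *: Pij V i i.
Proof.
rewrite /Pij !mulmxA -(mulmxA (col i V)) -(mulmxA (col i V)) cdelta_c.
by rewrite mul_mx_scalar -scalemxAl !mxE.
Qed.

Lemma swap4 (T : zmodType) n m (F : 'I_n -> 'I_n -> 'I_m -> 'I_m -> T) :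
  \sum_(i < n) \sum_(j < n) \sum_(a < m) \sum_(b < m) F i j a b =
  \sum_(a < m) \sum_(b < m) \sum_(i < n) \sum_(j < n) F i j a b.
Proof.
under eq_bigr => i _ do rewrite exchange_big.
rewrite exchange_big; apply: eq_bigr => a _.
under eq_bigr => i _ do rewrite exchange_big.
by rewrite exchange_big.
Qed.

Lemma swap3 (T : zmodType) n m (F : 'I_n -> 'I_m -> 'I_m -> T) :
  \sum_(l < n) \sum_(a < m) \sum_(b < m) F l a b =
  \sum_(a < m) \sum_(b < m) \sum_(l < n) F l a b.
Proof.
rewrite exchange_big; apply: eq_bigr => a _.
by rewrite exchange_big.
Qed.

Lemma sum_cVV n (V : 'M[C]_n) a b : unitary V ->
  \sum_j ((V a j)^* * V b j) = (b == a)%:R.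
Proof.
case=> h _; have := congr1 (fun M : 'M[C]_n => M b a) h; rewrite !mxE => <-.
by apply: eq_bigr => j _; rewrite !mxE mulrC.
Qed.

Lemma KI dA dB (V : 'M[C]_dA) (U : 'I_dA -> 'M[C]_dB) (Z : 'M[C]_(dA * dB)) :
  (0 < dA)%N -> unitary V ->
  dA%:R *: maptens (@Rone R dA dA) (Qmap U) Z =
  \sum_l \sum_i \sum_j (Kop V U l i j *m Z *m adj (Kop V U l i j)).
Proof.
move=> hA uV.
have R1 : forall l i j, Kop V U l i j *m Z *m adj (Kop V U l i j) =
   \sum_a \sum_b ((((V a j)^* * V b j) *: Pij V i i) *t (U l *m block Z a b *m adj (U l))).
  move=> l i j; rewrite {1}(block_decomp Z) mulmx_sumr mulmx_suml; apply: eq_bigr => a _.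
  rewrite mulmx_sumr mulmx_suml; apply: eq_bigr => b _.
  by rewrite /Kop adj_tens !tensmx_mul adjPij Pij_delta.
under eq_bigr => l _ do under eq_bigr => i _ do under eq_bigr => j _ do rewrite R1.
under eq_bigr => l _ do rewrite swap4.
have R2 : forall l a b, \sum_i \sum_j ((((V a j)^* * V b j) *: Pij V i i) *t (U l *m block Z a b *m adj (U l)))
   = ((a == b)%:R)%:M *t (U l *m block Z a b *m adj (U l)).
  move=> l a b.
  under eq_bigr => i _ do rewrite -tensmx_suml -scaler_suml sum_cVV //.
  by rewrite -tensmx_suml -scaler_sumr sum_Pii // scalemx1 eq_sym.
under eq_bigr => l _ do under eq_bigr => a _ do under eq_bigr => b _ do rewrite R2.
rewrite swap3 /maptens scaler_sumr; apply: eq_bigr => a _.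
rewrite scaler_sumr; apply: eq_bigr => b _.
rewrite /Rone mxtrace_delta /Qmap tensmxZr scalerA mulfV ?pnatr_eq0 -?lt0n // scale1r.
by rewrite tensmx_sumr.
Qed.

Lemma maptens_sum3conj k n m p (K : 'I_p -> 'I_p -> 'I_p -> 'M[C]_(m, n)) (X : 'M[C]_(k * n)) :
  maptens (@idmap R k) (fun Z => \sum_l \sum_i \sum_j (K l i j *m Z *m adj (K l i j))) X =
  \sum_l \sum_i \sum_j ((1%:M *t K l i j) *m X *m adj (1%:M *t K l i j)).
Proof.
rewrite (maptens_summap (fun l Z => \sum_i \sum_j (K l i j *m Z *m adj (K l i j)))).
apply: eq_bigr => l _.
rewrite (maptens_summap (fun i Z => \sum_j (K l i j *m Z *m adj (K l i j)))).
apply: eq_bigr => i _.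
rewrite (maptens_summap (fun j Z => (K l i j *m Z *m adj (K l i j)))).
apply: eq_bigr => j _.
by rewrite maptens_conj.
Qed.

Lemma sum3_split (T : zmodType) p (F : 'I_p -> 'I_p -> 'I_p -> T) :
  \sum_l \sum_i \sum_j F l i j =
  \sum_j F j j j + \sum_l \sum_i \sum_j (if (i == j) && (l == j) then 0 else F l i j).
Proof.
have E : forall l i j, F l i j = (if (i == j) && (l == j) then F l i j else 0) +
                       (if (i == j) && (l == j) then 0 else F l i j).
  by move=> l i j; case: ifP; rewrite ?addr0 ?add0r.
under eq_bigr => l _ do under eq_bigr => i _ do under eq_bigr => j _ do rewrite E.
rewrite (eq_bigr (fun l => \sum_i \sum_j (if (i == j) && (l == j) then F l i j else 0) +
          \sum_i \sum_j (if (i == j) && (l == j) then 0 else F l i j))); last first.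
  by move=> l _; rewrite -big_split; apply: eq_bigr => i _; rewrite -big_split.
rewrite big_split /=; congr (_ + _).
under eq_bigr => l _ do rewrite exchange_big.
rewrite exchange_big; apply: eq_bigr => j _.
rewrite (eq_bigr (fun l => if l == j then F l j j else 0)); last first.
  move=> l _; case: (eqVneq l j) => [->|ne].
    by under eq_bigr => i _ do rewrite andbT; rewrite sum_if_eq.
  by rewrite big1 // => i _; rewrite andbF.
by rewrite sum_if_eq.
Qed.

Lemma part1_loewner dA dB k (V : 'M[C]_dA) (U : 'I_dA -> 'M[C]_dB) (rho : 'M[C]_(k * (dA * dB))) :
  (0 < dA)%N -> unitary V -> psd rho ->
  let CU := \sum_(j < dA) ((col j V *m adj (col j V)) *t U j) in
  loewner (maptens (@idmap R k) (fun X => CU *m X *m adj CU) rho)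
     ((dA%:R ^+ 2) *: maptens (@idmap R k) (maptens (@Rone R dA dA) (Qmap U)) rho).
Proof.
move=> hA uV prho CU.
set M := maptens (@idmap R k) (maptens (@Rone R dA dA) (Qmap U)) rho.
rewrite maptens_conj.
have HY : (1%:M : 'M[C]_k) *t CU = \sum_j ((1%:M : 'M[C]_k) *t Kop V U j j j) by rewrite /CU tensmx_sumr.
have HM : dA%:R *: M = \sum_l \sum_i \sum_j
    (((1%:M : 'M[C]_k) *t Kop V U l i j) *m rho *m adj ((1%:M : 'M[C]_k) *t Kop V U l i j)).
  rewrite /M -maptens_scalemap -maptens_sum3conj; apply: maptens_ext => Z.
  exact: KI.
rewrite sum3_split in HM.
have h1 := cs_loewner (fun j => (1%:M : 'M[C]_k) *t Kop V U j j j) prho.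
rewrite -HY in h1.
apply: (loewner_trans h1).
rewrite expr2 -scalerA; apply: loewnerZ; first by rewrite ler0n.
rewrite /loewner HM addrC addKr.
apply: psd_sum => l; apply: psd_sum => i; apply: psd_sum => j.
by case: ifP => _; [exact: psd0 | exact: psd_conj].
Qed.

Lemma Qmap_channel dA dB (U : 'I_dA -> 'M[C]_dB) :
  (0 < dA)%N -> (forall j, unitary (U j)) -> channel (Qmap U).
Proof.
move=> hA uU.
have dA0 : (dA%:R : C) != 0 by rewrite pnatr_eq0 -lt0n.
split; first split.
- move=> a X Y; rewrite /Qmap.
  have E : forall l, U l *m (a *: X + Y) *m adj (U l) =
      a *: (U l *m X *m adj (U l)) + U l *m Y *m adj (U l).
    by move=> l; rewrite mulmxDr mulmxDl -scalemxAr -scalemxAl.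
  under eq_bigr => l _ do rewrite E.
  by rewrite big_split /= -scaler_sumr scalerDr !scalerA mulrC.
- move=> k X pX; rewrite /Qmap.
  rewrite (maptens_scalemap (dA%:R^-1) (fun Z => \sum_l (U l *m Z *m adj (U l)))).
  rewrite (maptens_summap (fun l Z => U l *m Z *m adj (U l))).
  apply: psdZ; first by rewrite invr_ge0 ler0n.
  apply: psd_sum => l; rewrite maptens_conj; exact: psd_conj.
- move=> X; rewrite /Qmap mxtraceZ raddf_sum.
  rewrite (eq_bigr (fun _ => \tr X)); last first.
    move=> l _; rewrite -[LHS]/(\tr (U l *m X *m adj (U l))) mxtrace_mulC mulmxA.
    by case: (uU l) => _ ->; rewrite mul1mx.
  by rewrite sumr_const card_ord -[\tr X *+ dA]mulr_natl mulKf.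
Qed.

Lemma tens_delta m n p q (i : 'I_m) (j : 'I_n) (k : 'I_p) (l : 'I_q) :
  (delta_mx i j : 'M[C]_(m,n)) *t (delta_mx k l : 'M[C]_(p,q)) =
  delta_mx (mxtens_index (i, k)) (mxtens_index (j, l)).
Proof.
apply/matrixP=> x y.
case: (mxtens_indexP x)=> x0 x1; case: (mxtens_indexP y)=> y0 y1.
rewrite tensmxE !mxE !(inj_eq (can_inj (@mxtens_indexK _ _))) !xpair_eqE.
by case: (x0 == i); case: (y0 == j); case: (x1 == k); case: (y1 == l); rewrite ?mulr1 ?mulr0.
Qed.

Definition phiv n : 'cV[C]_(n * n) := \sum_p delta_mx (mxtens_index (p, p)) 0.

Lemma phiv_outer n : phiv n *m adj (phiv n) =
  \sum_p \sum_q ((delta_mx p q : 'M[C]_n) *t delta_mx p q).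
Proof.
rewrite /phiv adj_sum mulmx_suml; apply: eq_bigr => p _.
rewrite mulmx_sumr; apply: eq_bigr => q _.
by rewrite adj_delta mul_delta_mx tens_delta.
Qed.

Lemma PP n (V : 'M[C]_n) i j k l :
  Pij V i j *m Pij V k l = ((adj V *m V) j k) *: Pij V i l.
Proof.
rewrite /Pij mulmxA -(mulmxA (col i V)).
have -> : adj (col j V) *m col k V = ((adj V *m V) j k)%:M.
  apply/matrixP=> x y; rewrite [x]ord1 [y]ord1 !mxE eqxx mulr1n.
  by apply: eq_bigr => t _; rewrite !mxE.
by rewrite mul_mx_scalar -scalemxAl.
Qed.

Lemma CU_unit dA dB (V : 'M[C]_dA) (U : 'I_dA -> 'M[C]_dB) :
  unitary V -> (forall j, unitary (U j)) ->
  let CU := \sum_(j < dA) ((col j V *m adj (col j V)) *t U j) in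
  adj CU *m CU = 1%:M.
Proof.
move=> uV uU CU.
rewrite /CU adj_sum mulmx_suml.
rewrite (eq_bigr (fun j => Pij V j j *t 1%:M)); last first.
  move=> j _; rewrite mulmx_sumr.
  rewrite (eq_bigr (fun l => if l == j then Pij V j j *t 1%:M else 0)).
    by rewrite sum_if_eq.
  move=> l _; rewrite adj_tens tensmx_mul -/(Pij V j j) adjPij -/(Pij V l l) PP.
  case: uV => _ ->; rewrite mxE eq_sym.
  case: (eqVneq l j) => [->|ne]; last by rewrite mulr0n scale0r tens0mx.
  by case: (uU j) => _ ->; rewrite mulr1n scale1r.
by rewrite -tensmx_suml sum_Pii // tens11.
Qed.

Lemma eMe m (M : 'M[C]_m) (i j : 'I_m) :
  (adj (delta_mx i 0 : 'cV[C]_m) *m M *m (delta_mx j 0 : 'cV[C]_m)) 0 0 = M i j.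
Proof. by rewrite adj_delta -rowE -colE !mxE. Qed.

Lemma qf_phi n (M : 'M[C]_(n * n)) :
  qf M (phiv n) = \sum_r \sum_s M (mxtens_index (r, r)) (mxtens_index (s, s)).
Proof.
rewrite /qf /phiv adj_sum mulmx_suml mulmx_suml summxE; apply: eq_bigr => r _.
rewrite mulmx_sumr summxE; apply: eq_bigr => s _.
by rewrite eMe.
Qed.

Lemma qf_phi_tens n (A B : 'M[C]_n) :
  qf (A *t B) (phiv n) = \sum_r \sum_s A r s * B r s.
Proof.
rewrite qf_phi; apply: eq_bigr => r _; apply: eq_bigr => s _.
by rewrite tensmxE.
Qed.

Lemma phiv_norm n : adj (phiv n) *m phiv n = (n%:R : C)%:M.
Proof.
apply/matrixP=> x y; rewrite [x]ord1 [y]ord1.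
have -> : (adj (phiv n) *m phiv n) 0 0 = qf 1%:M (phiv n) by rewrite /qf mulmx1.
rewrite -tens11 qf_phi_tens !mxE eqxx mulr1n.
rewrite (eq_bigr (fun r => 1)); first by rewrite sumr_const card_ord.
move=> r _; rewrite (bigD1 r) //= big1 ?addr0; first by rewrite !mxE eqxx mulr1.
by move=> s /negPf ne; rewrite !mxE eq_sym ne mulr0.
Qed.

Lemma linD n m (M : 'M[C]_n -> 'M[C]_m) X Y : linmap M -> M (X + Y) = M X + M Y.
Proof. by move=> h; have := h 1 X Y; rewrite !scale1r. Qed.

Lemma mxtrace11 (A : 'M[C]_1) : \tr A = A 0 0.
Proof. by rewrite /mxtrace big_ord1. Qed.

Lemma lin0 n m (M : 'M[C]_n -> 'M[C]_m) : linmap M -> M 0 = 0.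
Proof.
move=> h; have E := h 1 0 0; rewrite !scale1r addr0 in E.
by apply: (@addrI _ (M 0)); rewrite addr0 -E.
Qed.

Lemma lin_sum n m (M : 'M[C]_n -> 'M[C]_m) (I : finType) (F : I -> 'M[C]_n) :
  linmap M -> M (\sum_i F i) = \sum_i M (F i).
Proof. by move=> h; apply: (big_morph M (fun X Y => linD X Y h) (lin0 h)). Qed.

Lemma linZ n m (M : 'M[C]_n -> 'M[C]_m) a X : linmap M -> M (a *: X) = a *: M X.
Proof. by move=> h; have := h a X 0; rewrite addr0 (lin0 h) addr0. Qed.

Lemma bessel m p (J : 'M[C]_m) (u : 'I_p -> 'cV[C]_m) (c : C) :
  psd J -> c != 0 -> c^* = c ->
  (forall i j, adj (u i) *m u j = (c * (i == j)%:R)%:M) ->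
  c^-1 * \sum_j qf J (u j) <= \tr J.
Proof.
move=> pJ c0 cr hu.
set P := c^-1 *: \sum_j (u j *m adj (u j)).
have adjP : adj P = P.
  rewrite /P adjZ adj_sum; congr (_ *: _).
    by apply: (etrans (conjc_inv c)); rewrite cr.
  by apply: eq_bigr => j _; rewrite adj_mul adjK.
have PPP : P *m P = P.
  rewrite /P -scalemxAl -scalemxAr scalerA mulmx_suml.
  rewrite (eq_bigr (fun i => c *: (u i *m adj (u i)))); last first.
    move=> i _; rewrite mulmx_sumr.
    rewrite (eq_bigr (fun j => if j == i then c *: (u i *m adj (u i)) else 0)).
      by rewrite sum_if_eq.
    move=> j _; rewrite mulmxA -(mulmxA (u i)) hu mul_mx_scalar -scalemxAl eq_sym.
    by case: (eqVneq i j) => [->|ne]; rewrite ?mulr1 ?mulr0 ?scale0r ?mul0mx.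
  by rewrite -scaler_sumr scalerA -mulrA mulVf // mulr1.
set Q' := 1%:M - P.
have QQ : adj Q' *m Q' = Q'.
  rewrite /Q' adjB adj1 adjP mulmxBl !mulmxBr !mul1mx mulmx1 PPP.
  by rewrite subrr subr0.
have h0 : 0 <= \tr (Q' *m J *m adj Q') by apply: psd_trace_ge0; apply: psd_conj.
have E1 : \tr (Q' *m J *m adj Q') = \tr J - \tr (P *m J).
  by rewrite mxtrace_mulC mulmxA QQ /Q' mulmxBl mul1mx raddfB.
have E2 : \tr (P *m J) = c^-1 * \sum_j qf J (u j).
  rewrite /P -scalemxAl mxtraceZ mulmx_suml raddf_sum; congr (_ * _).
  apply: eq_bigr => j _; rewrite -[LHS]/(\tr (u j *m adj (u j) *m J)).
  by rewrite -mulmxA mxtrace_mulC mxtrace11.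
by move: h0; rewrite E1 E2 subr_ge0.
Qed.

Lemma maptens_lin n1 m1 n2 m2 (M1 : 'M[C]_n1 -> 'M[C]_m1) (M2 : 'M[C]_n2 -> 'M[C]_m2) :
  linmap M2 -> linmap (maptens M1 M2).
Proof.
move=> h a X Y; rewrite /maptens scaler_sumr -big_split; apply: eq_bigr => i _.
rewrite scaler_sumr -big_split; apply: eq_bigr => j _ /=.
by rewrite blockD blockZ h tensmxDr tensmxZr.
Qed.

Lemma sum_natr_eq (I : finType) (F : I -> C) (a : I) :
  \sum_b ((b == a)%:R * F b) = F a.
Proof.
rewrite -(sum_if_eq F a); apply: eq_bigr => b _.
by case: (b == a); rewrite ?mul1r ?mul0r.
Qed.

Lemma qf_delta_phi n (p q : 'I_n) (Z : 'M[C]_n) :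
  qf ((delta_mx p q : 'M[C]_n) *t Z) (phiv n) = Z p q.
Proof.
rewrite qf_phi_tens.
rewrite (eq_bigr (fun r => (r == p)%:R * Z r q)); first by rewrite sum_natr_eq.
move=> r _; rewrite (eq_bigr (fun s => (s == q)%:R * ((r == p)%:R * Z r s))).
  by rewrite sum_natr_eq.
by move=> s _; rewrite mxE -mulnb natrM mulrCA mulrA.
Qed.

Lemma conj_tens1 k m (A : 'M[C]_k) (B Z : 'M[C]_m) :
  adj ((1%:M : 'M[C]_k) *t B) *m (A *t Z) *m ((1%:M : 'M[C]_k) *t B) = A *t (adj B *m Z *m B).
Proof. by rewrite adj_tens adj1 !tensmx_mul mul1mx mulmx1. Qed.

Lemma maptens_scaleX k n m (M : 'M[C]_n -> 'M[C]_m) (a : C) (X : 'M[C]_(k * n)) :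
  linmap M -> maptens (@idmap R k) M (a *: X) = a *: maptens (@idmap R k) M X.
Proof.
move=> h; rewrite /maptens scaler_sumr; apply: eq_bigr => i _.
rewrite scaler_sumr; apply: eq_bigr => j _.
by rewrite blockZ linZ // tensmxZr.
Qed.

Lemma qf_flip m n (Z : 'M[C]_m) (B : 'M[C]_(m, n)) v :
  qf Z (B *m v) = qf (adj B *m Z *m B) v.
Proof. by rewrite /qf adj_mul !mulmxA. Qed.

Lemma MRQ_delta dA dB (Q : 'M[C]_dB -> 'M[C]_dB) (a1 a2 : 'I_dA) (b1 b2 : 'I_dB) :
  linmap Q ->
  maptens (@Rone R dA dA) Q ((delta_mx a1 a2 : 'M[C]_dA) *t (delta_mx b1 b2 : 'M[C]_dB)) =
  (a1 == a2)%:R *: ((1%:M : 'M[C]_dA) *t Q (delta_mx b1 b2)).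
Proof.
move=> hQ; rewrite /maptens /Rone.
rewrite (eq_bigr (fun a => \sum_b (((a == b)%:R * ((a == a1) && (b == a2))%:R) *:
            ((1%:M : 'M[C]_dA) *t Q (delta_mx b1 b2))))); last first.
  move=> a _; apply: eq_bigr => b _.
  rewrite block_tens linZ // mxtrace_delta -[((a == b)%:R)%:M]scalemx1 tensmxZl tensmxZr scalerA.
  by rewrite [(delta_mx a1 a2) a b]mxE.
rewrite (eq_bigr (fun a => ((a == a1)%:R * (a == a2)%:R) *: ((1%:M : 'M[C]_dA) *t Q (delta_mx b1 b2)))); last first.
  move=> a _; rewrite -scaler_suml; congr (_ *: _).
  rewrite (eq_bigr (fun b => (b == a)%:R * ((a == a1) && (b == a2))%:R)); last first.
    by move=> b _; rewrite eq_sym.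
  by rewrite sum_natr_eq -natrM mulnb.
by rewrite -scaler_suml sum_natr_eq.
Qed.

Lemma CUconj dA dB (V : 'M[C]_dA) (U : 'I_dA -> 'M[C]_dB) (G : 'M[C]_dB) :
  unitary V ->
  let CU := \sum_(j < dA) ((col j V *m adj (col j V)) *t U j) in
  adj CU *m ((1%:M : 'M[C]_dA) *t G) *m CU = \sum_j (Pij V j j *t (adj (U j) *m G *m U j)).
Proof.
move=> uV CU.
rewrite /CU adj_sum !mulmx_suml; apply: eq_bigr => j _.
rewrite mulmx_sumr.
rewrite (eq_bigr (fun l => if l == j then Pij V j j *t (adj (U j) *m G *m U j) else 0)).
  by rewrite sum_if_eq.
move=> l _; rewrite adj_tens !tensmx_mul mulmx1 -/(Pij V j j) adjPij -/(Pij V l l) PP.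
case: uV => _ ->; rewrite mxE eq_sym.
case: (eqVneq l j) => [->|ne]; last by rewrite mulr0n scale0r tens0mx.
by rewrite mulr1n scale1r.
Qed.

Lemma qfJ dB (Q : 'M[C]_dB -> 'M[C]_dB) (W : 'M[C]_dB) :
  qf (maptens (@idmap R dB) Q (phiv dB *m adj (phiv dB))) (((1%:M : 'M[C]_dB) *t W) *m phiv dB) =
  \sum_b1 \sum_b2 (adj W *m Q (delta_mx b1 b2) *m W) b1 b2.
Proof.
rewrite qf_flip phiv_outer maptens_sum_delta mulmx_sumr mulmx_suml qf_sum.
apply: eq_bigr => b1 _.
rewrite mulmx_sumr mulmx_suml qf_sum; apply: eq_bigr => b2 _.
by rewrite conj_tens1 qf_delta_phi.
Qed.

Lemma trPjj n (V : 'M[C]_n) j : unitary V -> \tr (Pij V j j) = 1.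
Proof.
case=> _ h; rewrite /Pij mxtrace_mulC mxtrace11.
have := congr1 (fun M : 'M[C]_n => M j j) h; rewrite !mxE eqxx mulr1n => <-.
by apply: eq_bigr => t _; rewrite !mxE.
Qed.

Lemma collapse2 m n (F : 'I_m -> 'I_n -> C) (a1 : 'I_m) :
  \sum_a2 \sum_b2 ((a1 == a2)%:R * F a2 b2) = \sum_b2 F a1 b2.
Proof.
rewrite (eq_bigr (fun a2 => (a2 == a1)%:R * \sum_b2 F a2 b2)).
  by rewrite sum_natr_eq.
by move=> a2 _; rewrite mulr_sumr eq_sym.
Qed.

Lemma part2_qfY dA dB (V : 'M[C]_dA) (U : 'I_dA -> 'M[C]_dB) (Q : 'M[C]_dB -> 'M[C]_dB) :
  unitary V -> channel Q ->
  let CU := \sum_(j < dA) ((col j V *m adj (col j V)) *t U j) in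
  qf (maptens (@idmap R (dA * dB)) (maptens (@Rone R dA dA) Q)
        (((dA * dB)%:R)^-1 *: (phiv (dA * dB) *m adj (phiv (dA * dB)))))
     (((1%:M : 'M[C]_(dA * dB)) *t CU) *m phiv (dA * dB)) =
  ((dA * dB)%:R)^-1 * \sum_j qf (maptens (@idmap R dB) Q (phiv dB *m adj (phiv dB)))
                                (((1%:M : 'M[C]_dB) *t U j) *m phiv dB).
Proof.
move=> uV cQ CU.
have lQ : linmap Q by case: cQ => -[].
have lM : linmap (maptens (@Rone R dA dA) Q) by apply: maptens_lin.
rewrite phiv_outer maptens_scaleX // maptens_sum_delta qfZ qf_sum; congr (_ * _).
under eq_bigr => p _ do rewrite qf_sum.
under eq_bigr => p _ do under eq_bigr => q _ do rewrite qf_flip conj_tens1 qf_delta_phi.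
under [RHS]eq_bigr => j _ do rewrite qfJ.
rewrite sum_tens.
under [LHS]eq_bigr => a1 _ do under eq_bigr => b1 _ do rewrite sum_tens.
under [LHS]eq_bigr => a1 _ do under eq_bigr => b1 _ do under eq_bigr => a2 _ do under eq_bigr => b2 _ do rewrite -tens_delta MRQ_delta // -scalemxAr -scalemxAl CUconj // mxE summxE.
rewrite (eq_bigr (fun a1 => \sum_b1 \sum_b2 \sum_k (Pij V k k a1 a1 * (adj (U k) *m Q (delta_mx b1 b2) *m U k) b1 b2))); last first.
  move=> a1 _; apply: eq_bigr => b1 _.
  apply: (etrans (collapse2 (fun a2 b2 =>
   \sum_k (Pij V k k *t (adj (U k) *m Q (delta_mx b1 b2) *m U k))
                   (mxtens_index (a1, b1)) (mxtens_index (a2, b2))) a1)).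
  by apply: eq_bigr => b2 _; apply: eq_bigr => k _; rewrite tensmxE.
under [LHS]eq_bigr => i _ do under eq_bigr => b1 _ do rewrite exchange_big.
under [LHS]eq_bigr => i _ do rewrite exchange_big.
rewrite [LHS]exchange_big; apply: eq_bigr => k _.
rewrite -[RHS]mul1r -{1}(trPjj k uV) /mxtrace mulr_suml; apply: eq_bigr => i _.
rewrite mulr_sumr; apply: eq_bigr => b1 _; rewrite mulr_sumr; apply: eq_bigr => b2 _ //.
Qed.


Lemma part2_qfX dA dB (V : 'M[C]_dA) (U : 'I_dA -> 'M[C]_dB) :
  unitary V -> (forall j, unitary (U j)) ->
  let CU := \sum_(j < dA) ((col j V *m adj (col j V)) *t U j) in
  qf (maptens (@idmap R (dA * dB)) (fun X => CU *m X *m adj CU)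
        (((dA * dB)%:R)^-1 *: (phiv (dA * dB) *m adj (phiv (dA * dB)))))
     (((1%:M : 'M[C]_(dA * dB)) *t CU) *m phiv (dA * dB)) = ((dA * dB)%:R)^-1 * ((dA * dB)%:R * (dA * dB)%:R).
Proof.
move=> uV uU CU.
rewrite maptens_conj qf_conj mulmxA adj_tens adj1 tensmx_mul mul1mx (CU_unit uV uU) tens11 mul1mx.
rewrite qfZ; congr (_ * _).
by rewrite /qf !mulmxA -(mulmxA (adj (phiv _) *m phiv _)) phiv_norm mul_mx_scalar !mxE eqxx mulr1n.
Qed.

Lemma u_orth dB p (U : 'I_p -> 'M[C]_dB) :
  (forall j, unitary (U j)) -> (forall i j, i != j -> \tr (adj (U i) *m U j) = 0) ->
  forall i j, adj (((1%:M : 'M[C]_dB) *t U i) *m phiv dB) *m (((1%:M : 'M[C]_dB) *t U j) *m phiv dB)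
     = ((dB%:R : C) * (i == j)%:R)%:M.
Proof.
move=> uU orth i j.
rewrite [LHS]mx11_scalar; congr (_%:M).
rewrite adj_mul !mulmxA -(mulmxA _ (adj _)) adj_tens adj1 tensmx_mul mul1mx.
rewrite -/(qf _ (phiv dB)) qf_phi_tens.
rewrite (eq_bigr (fun r => (adj (U i) *m U j) r r)); last first.
  move=> r _; rewrite (bigD1 r) //= big1 ?addr0; first by rewrite !mxE eqxx mul1r.
  by move=> s /negPf ne; rewrite !mxE eq_sym ne mul0r.
rewrite -/(\tr (adj (U i) *m U j)).
case: (eqVneq i j) => [->|ne]; last by rewrite orth // mulr0.
by case: (uU j) => _ ->; rewrite mxtrace1 mulr1.
Qed.

Lemma J_psd dB (Q : 'M[C]_dB -> 'M[C]_dB) : channel Q ->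
  psd (maptens (@idmap R dB) Q (phiv dB *m adj (phiv dB))).
Proof. by case=> -[_ cp] _; apply: cp; apply: psd_outer. Qed.

Lemma J_tr dB (Q : 'M[C]_dB -> 'M[C]_dB) : channel Q ->
  \tr (maptens (@idmap R dB) Q (phiv dB *m adj (phiv dB))) = dB%:R.
Proof.
case=> _ tp; rewrite phiv_outer maptens_sum_delta raddf_sum.
rewrite (eq_bigr (fun p => 1)); first by rewrite sumr_const card_ord.
move=> p _; rewrite raddf_sum (bigD1 p) //= big1 ?addr0.
  by rewrite -[LHS]/(\tr (delta_mx p p *t Q (delta_mx p p))) mxtrace_tens tp !mxtrace_delta eqxx mul1r.
move=> q /negPf ne; rewrite -[LHS]/(\tr (delta_mx p q *t Q (delta_mx p q))).
by rewrite mxtrace_tens mxtrace_delta eq_sym ne mul0r.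
Qed.

Import order.Order.TTheory.

Lemma part2_bound dA dB (V : 'M[C]_dA) (U : 'I_dA -> 'M[C]_dB) (Q : 'M[C]_dB -> 'M[C]_dB) (l : R) :
  (0 < dA)%N -> (0 < dB)%N -> unitary V -> (forall j, unitary (U j)) ->
  (forall i j, i != j -> \tr (adj (U i) *m U j) = 0) -> channel Q ->
  let CU := \sum_(j < dA) ((col j V *m adj (col j V)) *t U j) in
  let Phi := ((dA * dB)%:R)^-1 *: (phiv (dA * dB) *m adj (phiv (dA * dB))) in
  loewner (maptens (@idmap R (dA * dB)) (fun X => CU *m X *m adj CU) Phi)
          (l%:C *: maptens (@idmap R (dA * dB)) (maptens (@Rone R dA dA) Q) Phi) ->
  dA%:R ^+ 2 <= l.
Proof.
move=> hA hB uV uU orth cQ CU Phi h.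
have := loewner_qf (((1%:M : 'M[C]_(dA * dB)) *t CU) *m phiv (dA * dB)) h.
rewrite qfZ part2_qfX // part2_qfY //.
set S := \sum_j _.
set n : C := (dA * dB)%:R.
have n0 : 0 < n by rewrite ltr0n muln_gt0 hA hB.
have dB0 : (0 : C) < dB%:R by rewrite ltr0n.
have S0 : 0 <= S.
  by apply: sumr_ge0 => j _; apply: J_psd.
have hS : dB%:R^-1 * S <= dB%:R.
  rewrite -{2}(J_tr cQ); apply: bessel; first exact: J_psd cQ.
  - exact: lt0r_neq0.
  - by rewrite rmorph_nat.
  - exact: u_orth uU orth.
have hS2 : S <= dB%:R * dB%:R.
  have dBi : (0 : C) < dB%:R^-1 by rewrite invr_gt0.
  by rewrite -(ler_pM2l dBi) mulrA mulVf ?lt0r_neq0 // mul1r.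
rewrite mulKf ?lt0r_neq0 // => h1.
have h2 : n * n <= l%:C * S.
  have ni : 0 < n^-1 by rewrite invr_gt0.
  by rewrite -(ler_pM2l ni) mulKf ?lt0r_neq0 // mulrCA.
rewrite -lecR rmorphXn rmorph_nat.
have [l0|l0] := lerP 0 l.
  have h3 : l%:C * S <= l%:C * (dB%:R * dB%:R) by apply: ler_wpM2l => //; rewrite ler0c.
  have h4 := le_trans h2 h3.
  have e : n * n = (dA%:R ^+ 2) * (dB%:R * dB%:R) by rewrite /n natrM mulrACA expr2.
  rewrite e in h4.
  by rewrite -(ler_pM2r (mulr_gt0 dB0 dB0)).
exfalso.
have h3 : l%:C * S <= 0 by apply: mulr_le0_ge0 => //; rewrite -(rmorph0 (real_complex R)) lecR ltW.
have := lt_le_trans (mulr_gt0 n0 n0) (le_trans h2 h3).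
by rewrite ltxx.
Qed.

Lemma log2_le (x : R) (a : nat) : (0 < a)%N -> x <= a%:R ^+ 2 -> log2 x <= 2 * log2 (a%:R : R).
Proof.
move=> a0 hx; rewrite /log2 mulrA; apply: ler_wpM2r.
  by rewrite invr_ge0 ln_ge0 // ler1n.
have a1 : (1 : R) <= a%:R by rewrite ler1n.
have la : 0 <= ln (a%:R : R) by apply: ln_ge0.
have [x1|x1] := lerP x 1.
  apply: (le_trans (ln_le0 x1)); by rewrite mulr_ge0.
have x0 : 0 < x by apply: lt_trans x1.
rewrite -[2]/(2%:R) mulr_natl -lnXn ?(lt_le_trans ltr01 a1) //.
by rewrite ler_ln // posrE exprn_gt0 // (lt_le_trans ltr01 a1).
Qed.

Lemma log2_ge (x : R) (a : nat) : (0 < a)%N -> a%:R ^+ 2 <= x -> 2 * log2 (a%:R : R) <= log2 x.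
Proof.
move=> a0 hx; rewrite /log2 mulrA; apply: ler_wpM2r.
  by rewrite invr_ge0 ln_ge0 // ler1n.
have a1 : (1 : R) <= a%:R by rewrite ler1n.
have ap : (0 : R) < a%:R by apply: lt_le_trans ltr01 a1.
rewrite -[2]/(2%:R) mulr_natl -lnXn //.
rewrite ler_ln // posrE ?exprn_gt0 //.
by apply: lt_le_trans hx; rewrite exprn_gt0.
Qed.

Lemma state_Phi n : (0 < n)%N -> state ((n%:R : C)^-1 *: (phiv n *m adj (phiv n))).
Proof.
move=> n0; split.
  by apply: psdZ; [rewrite invr_ge0 ler0n | exact: psd_outer].
rewrite mxtraceZ mxtrace_mulC phiv_norm mxtrace11 mxE eqxx mulr1n mulVf //.
by rewrite pnatr_eq0 -lt0n.
Qed.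

Local Open Scope classical_set_scope.

Lemma Dmax_le n (X Y : 'M[C]_n) (a : nat) : (0 < a)%N ->
  loewner X (((a%:R ^+ 2 : R))%:C *: Y) -> (Dmax X Y <= (2 * log2 (a%:R : R))%:E)%E.
Proof.
move=> a0 h; rewrite /Dmax.
set S := [set l : R | loewner X (l%:C *: Y)].
have SA : S (a%:R ^+ 2) by [].
have ne : S !=set0 by exists (a%:R ^+ 2).
rewrite asboolT //= lee_fin; apply: log2_le => //.
have [lb|nlb] := pselect (has_lbound S).
  exact: ge_inf lb _ SA.
rewrite inf_out; first by rewrite exprn_ge0 // ler0n.
by case.
Qed.

Lemma Dmax_ge n (X Y : 'M[C]_n) (a : nat) : (0 < a)%N ->
  (forall l : R, loewner X (l%:C *: Y) -> a%:R ^+ 2 <= l) ->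
  ((2 * log2 (a%:R : R))%:E <= Dmax X Y)%E.
Proof.
move=> a0 h; rewrite /Dmax.
set S := [set l : R | loewner X (l%:C *: Y)].
case: (boolP `[< S !=set0 >]) => [/asboolP ne|_]; last exact: leey.
rewrite lee_fin; apply: log2_ge => //.
by apply: lb_le_inf => // l Sl; apply: h.
Qed.

Lemma main_lower dA dB (V : 'M[C]_dA) (U : 'I_dA -> 'M[C]_dB) :
  (0 < dA)%N -> unitary V -> (forall j, unitary (U j)) ->
  forall CU, CU = \sum_(j < dA) ((col j V *m adj (col j V)) *t U j) ->
  (- (2 * log2 (dA%:R : R))%:E <= Sminch (fun X : 'M[C]_(dA * dB) => CU *m X *m adj CU))%E.
Proof.
move=> hA uV uU CU hCU; rewrite /Sminch leeN2.
have hQ : (ereal_inf [set d | exists Q : 'M[C]_dB -> 'M[C]_dB, channel Q /\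
    d = Dmaxch (fun X : 'M[C]_(dA * dB) => CU *m X *m adj CU) (maptens (@Rone R dA dA) Q)] <=
    Dmaxch (fun X : 'M[C]_(dA * dB) => CU *m X *m adj CU) (maptens (@Rone R dA dA) (Qmap U)))%E.
  by apply: ereal_inf_lbound; exists (Qmap U); split => //; apply: Qmap_channel.
apply: (le_trans hQ); apply: ge_ereal_sup => d [k [rho [st ->]]].
apply: Dmax_le => //; rewrite rmorphXn rmorph_nat.
rewrite hCU; exact: part1_loewner hA uV st.1.
Qed.

Lemma main_upper dA dB (V : 'M[C]_dA) (U : 'I_dA -> 'M[C]_dB) :
  (0 < dA)%N -> (0 < dB)%N -> unitary V -> (forall j, unitary (U j)) ->
  (forall i j, i != j -> \tr (adj (U i) *m U j) = 0) ->
  forall CU, CU = \sum_(j < dA) ((col j V *m adj (col j V)) *t U j) ->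
  (Sminch (fun X : 'M[C]_(dA * dB) => CU *m X *m adj CU) <= - (2 * log2 (dA%:R : R))%:E)%E.
Proof.
move=> hA hB uV uU orth CU hCU; rewrite /Sminch leeN2.
apply/ereal_infP => _ [Q [cQ ->]].
set Phi := ((dA * dB)%:R : C)^-1 *: (phiv (dA * dB) *m adj (phiv (dA * dB))).
apply: (le_trans (Dmax_ge (X := maptens (@idmap R (dA * dB)) (fun X => CU *m X *m adj CU) Phi)
   (Y := maptens (@idmap R (dA * dB)) (maptens (@Rone R dA dA) Q) Phi) hA _)).
  by move=> l hl; rewrite hCU in hl; apply: (part2_bound hA hB uV uU orth cQ hl).
apply: ereal_sup_ubound; exists (dA * dB)%N, Phi; split => //.
by apply: state_Phi; rewrite muln_gt0 hA hB.
Qed.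


End A.
End Helpers.

Theorem proposition14 (R : realType) (dA dB : nat) (hA : (0 < dA)%N)
  (hB : (0 < dB)%N) (V : 'M[R[i]]_dA) (U : 'I_dA -> 'M[R[i]]_dB) :
  unitary V -> (forall j, unitary (U j)) ->
  let CU := \sum_(j < dA) ((col j V *m adj (col j V)) *t U j) in
  let CUchan := fun X : 'M[R[i]]_(dA * dB) => CU *m X *m adj CU in
  ((- (2 * log2 dA%:R)%:E <= Sminch CUchan)%E /\
   ((forall i j : 'I_dA, i != j -> \tr (adj (U i) *m U j) = 0) ->
      Sminch CUchan = (- (2 * log2 dA%:R)%:E)%E)).
Proof.
move=> uV uU CU CUchan.
have L := @Helpers.main_lower R dA dB V U hA uV uU CU (erefl _).
split; first exact: L.
move=> orth.
have H := @Helpers.main_upper R dA dB V U hA hB uV uU orth CU (erefl _).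
by apply/order.Order.POrderTheory.le_anti/andP; split.
Qed.
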